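(* Let $c_1,\dots,c_m \in \mathbb{R}^{n_y}\setminus\{0\}$, $d_1,\dots,d_m\in\mathbb{R}$, and $\mathcal{Y} := \bigcup_{j=1}^m \{ y \mid c_j^\top y \geq d_j\}$. For $y,w\in\mathbb{R}^{n_y}$ let $\mathrm{dist}(y,\mathcal{Y}+w):=\min_{a\in\mathcal{Y}+w}\|y-a\|_2$ and $p_j(y,w) := \frac{d_j - c_j^\top(y-w)}{\|c_j\|_2}$. Let $\alpha\in(0,1)$, let $\mathbb{W}\subseteq\mathbb{R}^{n_y}$, let $\hat w^{(1)},\dots,\hat w^{(N)}\in\mathbb{W}$, let $\nu := \frac1N\sum_{i=1}^N \boldsymbol{\delta}_{\hat w^{(i)}}$, let $\theta>0$, and let $$\mathbb{D} := \{\mu\in\mathcal{P}(\mathbb{W}) \mid W(\mu,\nu)\le\theta\}.$$ Then for every $y\in\mathbb{R}^{n_y}$, $$\sup_{\mu\in\mathbb{D}} \mathrm{CVaR}^\mu_\alpha[\mathrm{dist}(y,\mathcal{Y}+w)] \le \inf_{z\in\mathbb{R}}\ z + \frac{1}{1-\alpha}\sup_{\mu\in\mathbb{D}} \mathbb{E}^\mu\Big[\max\big\{\min_{j=1,\dots,m} p_j(y,w) - z,\, -z,\, 0\big\}\Big],$$ where $w$ is the random variable with distribution $\mu$.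
   Context: $\mathcal{P}(\mathbb{W})$ is the set of Borel probability measures on $\mathbb{W}$, and $\boldsymbol{\delta}_{w}$ is the Dirac measure at $w$. For a random loss $X$ with distribution determined by $\mu$, $\mathrm{CVaR}^\mu_\alpha(X) := \min_{z\in\mathbb{R}} \mathbb{E}^\mu\big[z + \frac{(X-z)^+}{1-\alpha}\big]$ with $(x)^+=\max\{x,0\}$. The Wasserstein distance (of order 1) is $W(\mu,\nu) := \min_{\kappa\in\mathcal{P}(\mathbb{W}^2)}\{\int_{\mathbb{W}^2}\|w-w'\|\,\mathrm{d}\kappa(w,w') \mid \Pi^1\kappa=\mu,\ \Pi^2\kappa=\nu\}$, where $\Pi^i\kappa$ is the $i$th marginal of $\kappa$ and $\|\cdot\|$ is an arbitrary norm on $\mathbb{R}^{n_y}$. *)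

(* Defs.v *)
From HB Require Import structures.
From mathcomp Require Import all_boot all_order all_algebra.
From mathcomp Require Import all_classical all_reals all_analysis.
Set Implicit Arguments. Unset Strict Implicit. Unset Printing Implicit Defensive.
Import Order.TTheory GRing.Theory Num.Theory.
Import numFieldNormedType.Exports.
Local Open Scope classical_set_scope.
Local Open Scope ring_scope.

(* R^{n} as row vectors, equipped with its Borel sigma-algebra
   (generated by the open sets of the product topology). *)
Definition Vec (R : realType) (n : nat) :=
  g_sigma_algebraType (@open ('rV[R]_n)).

Definition dotv (R : realType) (n : nat) (c y : 'rV[R]_n) : R :=
  \sum_(i < n) c ord0 i * y ord0 i.
Definition norm2 (R : realType) (n : nat) (v : 'rV[R]_n) : R :=
  Num.sqrt (dotv v v).

Definition is_norm (R : realType) (n : nat) (nrm : 'rV[R]_n -> R) : Prop :=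
  [/\ forall x, 0 <= nrm x,
      forall x, nrm x = 0 -> x = 0,
      forall (a : R) x, nrm (a *: x) = `|a| * nrm x
    & forall x y, nrm (x + y) <= nrm x + nrm y].

Definition Yset (R : realType) (n m : nat) (c : 'I_m -> 'rV[R]_n) (d : 'I_m -> R)
  : set 'rV[R]_n := [set y | exists j : 'I_m, d j <= dotv (c j) y].

Definition distYw (R : realType) (n m : nat) (c : 'I_m -> 'rV[R]_n) (d : 'I_m -> R)
  (y w : 'rV[R]_n) : R :=
  inf [set norm2 (y - a) | a in [set b + w | b in Yset c d]].

Definition pj (R : realType) (n m : nat) (c : 'I_m -> 'rV[R]_n) (d : 'I_m -> R)
  (j : 'I_m) (y w : 'rV[R]_n) : R :=
  (d j - dotv (c j) (y - w)) / norm2 (c j).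

Definition CVaR (R : realType) (n : nat) (mu : probability (Vec R n) R)
  (alpha : R) (X : Vec R n -> R) : \bar R :=
  ereal_inf [set (\int[mu]_w (z + Num.max (X w - z) 0 / (1 - alpha))%:E)%E
            | z in [set: R]].

Definition empirical (R : realType) (n N : nat) (what : 'I_N -> 'rV[R]_n)
  (A : set (Vec R n)) : \bar R :=
  ((N%:R)^-1)%:E * (\sum_(i < N) \d_(what i : Vec R n) A)%E.

Definition coupling (R : realType) (n : nat) (mu : probability (Vec R n) R)
  (nu : set (Vec R n) -> \bar R) (kappa : probability (Vec R n * Vec R n)%type R) : Prop :=
  forall A : set (Vec R n), measurable A ->
    kappa (fst @^-1` A) = mu A /\ kappa (snd @^-1` A) = nu A.

Definition wasserstein (R : realType) (n : nat) (nrm : 'rV[R]_n -> R)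
  (mu : probability (Vec R n) R) (nu : set (Vec R n) -> \bar R) : \bar R :=
  ereal_inf [set (\int[kappa]_p (nrm (p.1 - p.2))%:E)%E
            | kappa in [set kappa | coupling mu nu kappa]].

(* mu is a Borel probability measure on W ⊆ R^n: it is concentrated on a
   measurable subset of W *)
Definition supported_on (R : realType) (n : nat) (mu : probability (Vec R n) R)
  (W : set 'rV[R]_n) : Prop :=
  exists A : set (Vec R n), [/\ measurable A, A `<=` W & mu A = 1%E].

Definition ambiguity (R : realType) (n N : nat) (nrm : 'rV[R]_n -> R)
  (W : set 'rV[R]_n) (what : 'I_N -> 'rV[R]_n) (theta : R)
  : set (probability (Vec R n) R) :=
  [set mu | supported_on mu W /\ (wasserstein nrm mu (empirical what) <= theta%:E)%E].

(* Main.v *)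
Require Import Defs.
From HB Require Import structures.
From mathcomp Require Import all_boot all_order all_algebra.
From mathcomp Require Import all_classical all_reals all_analysis.
From mathcomp Require Import ring lra.
Import Order.TTheory GRing.Theory Num.Theory.
Import numFieldNormedType.Exports.
Local Open Scope classical_set_scope.
Local Open Scope ring_scope.
Import measurable_realfun.

Section aux.
Context {R : realType} {n : nat}.
Implicit Types (u v c : 'rV[R]_n).

Lemma dotvB c u v : dotv c (u - v) = dotv c u - dotv c v.
Proof.
rewrite /dotv -sumrB; apply: eq_bigr => i _; rewrite !mxE; ring.
Qed.

Lemma dotvD c u v : dotv c (u + v) = dotv c u + dotv c v.
Proof.
rewrite /dotv -big_split; apply: eq_bigr => i _; rewrite !mxE /=; ring.
Qed.

Lemma dotvZ c a u : dotv c (a *: u) = a * dotv c u.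
Proof.
rewrite /dotv mulr_sumr; apply: eq_bigr => i _; rewrite !mxE; ring.
Qed.

Lemma dotvZl c a u : dotv (a *: c) u = a * dotv c u.
Proof.
rewrite /dotv mulr_sumr; apply: eq_bigr => i _; rewrite !mxE; ring.
Qed.

Lemma dotvC c u : dotv c u = dotv u c.
Proof. by rewrite /dotv; apply: eq_bigr => i _; rewrite mulrC. Qed.

Lemma dotv_ge0 u : 0 <= dotv u u.
Proof. by apply: sumr_ge0 => i _; rewrite -expr2 sqr_ge0. Qed.

Lemma CS2 c u : dotv c u ^+ 2 <= dotv c c * dotv u u.
Proof.
have H : 0 <= \sum_(i < n) \sum_(j < n)
   (c ord0 i * u ord0 j - c ord0 j * u ord0 i) ^+ 2.
  by apply: sumr_ge0 => i _; apply: sumr_ge0 => j _; rewrite sqr_ge0.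
have E : \sum_(i < n) \sum_(j < n)
   (c ord0 i * u ord0 j - c ord0 j * u ord0 i) ^+ 2
   = 2 * (dotv c c * dotv u u - dotv c u ^+ 2).
  rewrite /dotv.
  set a := fun i => c ord0 i * c ord0 i.
  set b := fun i => u ord0 i * u ord0 i.
  set p := fun i => c ord0 i * u ord0 i.
  transitivity (\sum_(i < n) \sum_(j < n) (a i * b j + a j * b i - 2 * (p i * p j))).
    by apply: eq_bigr => i _; apply: eq_bigr => j _; rewrite /a /b /p; ring.
  under eq_bigr => i _ do rewrite sumrB big_split /=.
  rewrite sumrB big_split /= expr2 mulrBr mulrDl mul1r.
  congr (_ + _ - _).
  - by rewrite mulr_suml; apply: eq_bigr => i _; rewrite mulr_sumr.
  - rewrite mulr_suml exchange_big /=; apply: eq_bigr => i _; rewrite mulr_sumr.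
    by apply: eq_bigr => j _; rewrite /a /b /p; ring.
  - rewrite mulr_suml mulr_sumr; apply: eq_bigr => i _; rewrite !mulr_sumr.
    by apply: eq_bigr => j _; rewrite /a /b /p; ring.
move: H; rewrite E; nra.
Qed.

Lemma CS c u : dotv c u <= norm2 c * norm2 u.
Proof.
rewrite /norm2 -sqrtrM ?dotv_ge0 //.
apply: (le_trans (ler_norm _)).
by rewrite -sqrtr_sqr; apply: ler_wsqrtr; exact: CS2.
Qed.

Lemma norm2_ge0 u : 0 <= norm2 u.
Proof. exact: sqrtr_ge0. Qed.

Lemma norm2Z a u : norm2 (a *: u) = `|a| * norm2 u.
Proof.
rewrite /norm2 dotvZ dotvZl mulrA -expr2 sqrtrM ?sqr_ge0 //.
by rewrite sqrtr_sqr.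
Qed.

Lemma norm2N u : norm2 (- u) = norm2 u.
Proof. by rewrite -scaleN1r norm2Z normrN normr1 mul1r. Qed.

Lemma norm2_gt0 u : u != 0 -> 0 < norm2 u.
Proof.
move=> u0; rewrite /norm2 sqrtr_gt0 lt_def dotv_ge0 andbT.
apply: contra u0 => /eqP H; apply/eqP/rowP => i; rewrite mxE.
have : \sum_(k < n) u ord0 k * u ord0 k == 0 by apply/eqP.
rewrite psumr_eq0; last by move=> k _; rewrite -expr2 sqr_ge0.
by move/allP/(_ i (mem_index_enum _)); rewrite /= mulf_eq0 orbb => /eqP.
Qed.

End aux.

Lemma distYw_eq (R : realType) (n m : nat) (c : 'I_m -> 'rV[R]_n) (d : 'I_m -> R)
  (hm : (0 < m)%N) (hc : forall j, c j != 0) (y w : 'rV[R]_n) :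
  distYw c d y w = Num.max (\big[Num.min/pj c d (Ordinal hm) y w]_(j < m) pj c d j y w) 0.
Proof.
set F := fun j => pj c d j y w.
set M := Num.max _ 0.
set S := [set norm2 (y - a) | a in [set b + w | b in Yset c d]].
have lbS : lbound S M.
  move=> _ [_ [b [j hj] <-] <-].
  rewrite ge_max norm2_ge0 andbT.
  apply: (le_trans (bigmin_le _ j _)).
  rewrite /pj ler_pdivrMr ?norm2_gt0 //.
  have -> : y - (b + w) = - (b - (y - w)) by rewrite opprB opprD addrA addrAC.
  rewrite norm2N mulrC.
  have := CS (c j) (b - (y - w)); rewrite dotvB; lra.
have MS : S M.
  pose i0 := Order.arg_min (Ordinal hm) xpredT F.
  have Hi0 : \big[Num.min/F (Ordinal hm)]_(j < m) F j = F i0.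
    rewrite /i0; case: Order.TotalTheory.arg_minP => // i _ Hi.
    apply/eqP; rewrite eq_le bigmin_le /=.
    by apply/bigmin_geP; split => [|j _]; apply: Hi.
  have nc : 0 < norm2 (c i0) := norm2_gt0 _ (hc i0).
  rewrite /M -/F Hi0.
  have [Fle|Fgt] := leP (F i0) 0.
    exists y; last by rewrite subrr /norm2 /dotv big1 ?sqrtr0 // => i _; rewrite mxE mul0r.
    exists (y - w); last by rewrite subrK.
    exists i0; move: Fle; rewrite /F /pj pmulr_lle0 ?invr_gt0 //; lra.
  idtac.
  set t := F i0 / norm2 (c i0).
  exists (y + t *: c i0); last first.
    have t0 : 0 <= t by rewrite /t; apply: divr_ge0; apply: ltW.
    rewrite opprD addrA subrr add0r norm2N norm2Z ger0_norm // /t.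
    by rewrite -mulrA mulVf ?mulr1 // gt_eqF.
  exists (y - w + t *: c i0); last by rewrite addrAC subrK.
  exists i0; rewrite dotvD dotvB dotvZ.
  have -> : dotv (c i0) (c i0) = norm2 (c i0) ^+ 2 by rewrite sqr_sqrtr ?dotv_ge0.
  rewrite /t /F /pj.
  have nN : norm2 (c i0) != 0 by rewrite gt_eqF.
  set X := d i0 - _.
  have -> : X / norm2 (c i0) / norm2 (c i0) * norm2 (c i0) ^+ 2 = X by field.
  rewrite /X dotvB; lra.
apply/eqP; rewrite eq_le; apply/andP; split.
  by apply: ge_inf => //; exists M.
by apply: lb_le_inf => //; exists M.
Qed.

Lemma coord_meas (R : realType) (n : nat) (i : 'I_n) :
  measurable_fun setT (fun w : Vec R n => w ord0 i).
Proof.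
apply: (measurability _ (measurable_realfun.RGenOpens.measurableE R)).
move=> _ [_ [a [b ->] <-]]; rewrite setTI.
apply: sub_sigma_algebra.
have := @coord_continuous R 1 n ord0 i.
move/continuousP => /(_ `]a, b[%classic); apply.
exact: interval_open.
Qed.

Lemma bigmin_meas (R : realType) (n : nat) (I : Type) (s : seq I)
  (f0 : Vec R n -> R) (F : I -> Vec R n -> R) :
  measurable_fun setT f0 -> (forall j, measurable_fun setT (F j)) ->
  measurable_fun setT (fun w => \big[Num.min/f0 w]_(j <- s) F j w).
Proof.
move=> m0 mF; elim: s => [|a s IH].
  by under eq_fun => w do rewrite big_nil.
under eq_fun => w do rewrite big_cons.
exact: measurable_minr.
Qed.

Lemma pj_meas (R : realType) (n m : nat) (c : 'I_m -> 'rV[R]_n) (d : 'I_m -> R)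
  (j : 'I_m) (y : 'rV[R]_n) :
  measurable_fun setT (fun w : Vec R n => pj c d j y w).
Proof.
rewrite /pj /dotv.
apply: measurable_funM; last exact: measurable_cst.
apply: measurable_funB; first exact: measurable_cst.
apply: measurable_sum => i.
apply: measurable_funM; first exact: measurable_cst.
have -> : (fun w : Vec R n => (y - w) ord0 i) = (fun w => y ord0 i - w ord0 i).
  by apply/funext => w; rewrite !mxE.
apply: measurable_funB; first exact: measurable_cst.
exact: coord_meas.
Qed.

Lemma max_aux (R : realType) (a z : R) :
  Num.max (Num.max a 0 - z) 0 = Num.max (Num.max (a - z) (- z)) 0.
Proof.
by rewrite real_addr_maxl ?num_real // sub0r.
Qed.

Theorem lemma2 (R : realType) (n m N : nat)
  (c : 'I_m -> 'rV[R]_n) (d : 'I_m -> R)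
  (hm : (0 < m)%N) (hc : forall j, c j != 0)
  (alpha : R) (halpha : 0 < alpha < 1)
  (nrm : 'rV[R]_n -> R) (hnrm : is_norm nrm)
  (W : set 'rV[R]_n) (what : 'I_N -> 'rV[R]_n)
  (hN : (0 < N)%N) (hwhat : forall i, W (what i))
  (theta : R) (htheta : 0 < theta)
  (y : 'rV[R]_n) :
  (ereal_sup [set CVaR mu alpha (fun w : Vec R n => distYw c d y w)
             | mu in ambiguity nrm W what theta]
   <= ereal_inf [set (z%:E + ((1 - alpha)^-1)%:E *
         ereal_sup [set (\int[mu]_w
              (Num.max (Num.max
                 (\big[Num.min/pj c d (Ordinal hm) y w]_(j < m) pj c d j y w - z)
                 (- z)) 0)%:E)
                   | mu in ambiguity nrm W what theta])
        | z in [set: R]])%E.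
Proof.
apply: ub_ereal_sup => _ [mu Dmu <-].
apply: le_ereal_inf_tmp => _ [z _ <-].
set g := fun w : Vec R n => Num.max (Num.max
                 (\big[Num.min/pj c d (Ordinal hm) y w]_(j < m) pj c d j y w - z)
                 (- z)) 0.
set S := ereal_sup _.
have ca : 0 < (1 - alpha)^-1 by rewrite invr_gt0; lra.
have g0 : forall w, 0 <= g w by move=> w; rewrite /g le_max lexx orbT.
have mg : measurable_fun setT g.
  apply: measurable_maxr; last exact: measurable_cst.
  apply: measurable_maxr; last exact: measurable_cst.
  apply: measurable_funB; last exact: measurable_cst.
  apply: bigmin_meas; first exact: pj_meas.
  move=> j; exact: pj_meas.
have IS : (\int[mu]_w (g w)%:E <= S)%E.
  by apply: ereal_sup_ubound; exists mu.
have cv : (CVaR mu alpha (fun w : Vec R n => distYw c d y w) <=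
    \int[mu]_w (z%:E + ((1 - alpha)^-1)%:E * (g w)%:E))%E.
  apply: ereal_inf_lbound; exists z => //.
  apply: eq_integral => w _.
  rewrite (@distYw_eq R n m c d hm hc) /g -EFinM -EFinD; congr EFin.
  rewrite mulrC; congr (_ + _ * _); exact: max_aux.
apply: (le_trans cv).
have I0 : (0 <= \int[mu]_w (g w)%:E)%E by apply: integral_ge0 => w _; rewrite lee_fin.
have [Iy|Ify] := eqVneq (\int[mu]_w (g w)%:E)%E +oo%E.
  have Sy : S = +oo%E by apply/eqP; rewrite -leye_eq -Iy.
  rewrite Sy mulry gtr0_sg // mul1e addey //; exact: leey.
have ig : mu.-integrable setT (fun w => (g w)%:E).
  apply/integrableP; split; first exact/measurable_EFinP.
  under eq_integral => w _ do rewrite gee0_abs ?lee_fin //.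
  by rewrite ltey.
rewrite integralD //; last exact: integrableZl.
  rewrite integralZl // integral_cst //.
  rewrite [(z%:E * _)%E](_ : _ = z%:E); last first.
    by rewrite -[RHS]mule1; congr (_ * _)%E; exact: probability_setT.
  by apply: leeD2l; apply: lee_wpmul2l => //; rewrite lee_fin ltW.
exact: finite_measure_integrable_cst.
Qed.
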